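(* Let $\rho,\pi,\gamma,\delta>0$, $0<\beta<1$, $\sigma>0$ with $\sigma\neq 1$, and assume $$\rho<\delta<\rho+\delta\sigma,\qquad \frac{\delta+\pi-\pi\beta}{\beta}-\frac{\delta-\rho}{\sigma}>0 .$$ Put $z^*=\left(\frac{\beta\gamma}{\delta+\pi}\right)^{\frac{1}{\beta-1}}$ and $\theta=\frac{\delta+\pi-\pi\beta}{\beta}-\frac{\delta-\rho}{\sigma}$. Let $c_1>0$, $z_0>0$ with $z_0\neq z^*$, and $c_0,k_0,h_0,u_0>0$ with $u_0=z_0k_0/h_0$. Define for $t\ge 0$ $$z(t)=\frac{z^*z_0}{\left[(z^{*1-\beta}-z_0^{1-\beta})e^{-\frac{(1-\beta)(\delta+\pi)}{\beta}t}+z_0^{1-\beta}\right]^{\frac{1}{1-\beta}}},\qquad F(t)=\int_0^t z(s)^{\frac{\sigma-\beta}{\sigma}}e^{-\theta s}\,ds,$$ and $K=\frac{k_0}{c_0 z_0^{\frac{\beta-\sigma}{\sigma}}}$. Assume $$c_0 z_0^{\frac{\beta}{\sigma}}=\left(\frac{c_1\delta}{(1-\beta)\gamma}\right)^{-\frac{1}{\sigma}},\qquad \lim_{t\to\infty}F(t)=K,$$ $$\frac{\gamma(1-\beta)(\rho-\delta+\delta\sigma)}{\delta}=\frac{u_0}{k_0}\Big[\sigma c_0z_0^{\beta-1}-(\rho+\pi-\pi\sigma)k_0z_0^{\beta-1}+\beta\gamma(1-\sigma)k_0\Big].$$ Define $$c(t)=c_0z_0^{\frac{\beta}{\sigma}}e^{-\frac{\rho-\delta}{\sigma}t}z(t)^{-\frac{\beta}{\sigma}},\qquad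 k(t)=\big(K-F(t)\big)c_0z_0^{\frac{\beta}{\sigma}}z(t)^{-1}e^{\frac{\delta+\pi-\pi\beta}{\beta}t},$$ $$h(t)=\frac{h_0\Big[\sigma c_0z_0^{\frac{\beta}{\sigma}}e^{-\frac{\rho-\delta}{\sigma}t}z(t)^{\beta-\frac{\beta}{\sigma}}+\big(\beta\gamma(1-\sigma)-(\rho+\pi-\pi\sigma)z(t)^{\beta-1}\big)\big(K-F(t)\big)c_0z_0^{\frac{\beta}{\sigma}}e^{\frac{\delta+\pi-\pi\beta}{\beta}t}\Big]}{z_0\big[\sigma c_0z_0^{\beta-1}-(\rho+\pi-\pi\sigma)k_0z_0^{\beta-1}+\beta\gamma(1-\sigma)k_0\big]},$$ $$u(t)=\frac{u_0}{k_0}\Big[\sigma c_0z_0^{\beta-1}-(\rho+\pi-\pi\sigma)k_0z_0^{\beta-1}+\beta\gamma(1-\sigma)k_0\Big]\cdot\frac{K-F(t)}{\big[\beta\gamma(1-\sigma)-(\rho+\pi-\pi\sigma)z(t)^{\beta-1}\big]\big(K-F(t)\big)+\sigma z(t)^{\beta-\frac{\beta}{\sigma}}e^{-\theta t}},$$ $$\lambda(t)=\frac{c_1\delta}{(1-\beta)\gamma}e^{(\rho-\delta)t}z(t)^{\beta},\qquad \mu(t)=c_1e^{(\rho-\delta)t}.$$ Then $(c,u,k,h,\lambda,\mu)$ is a solution of the first-order conditions of the Lucas–Uzawa problem, namely for all $t\ge0$: $$\lambda=c^{-\sigma},\quad u^{\beta}=\frac{\gamma(1-\beta)k^{\beta}h^{-\beta}}{\delta}\frac{\lambda}{\mu},\quad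 \dot k=\gamma k^{\beta}u^{1-\beta}h^{1-\beta}-\pi k-c,\quad \dot h=\delta(1-u)h,$$ $$\dot\lambda=-\lambda\gamma\beta u^{1-\beta}k^{\beta-1}h^{1-\beta}+\lambda(\rho+\pi),\quad \dot\mu=\mu(\rho-\delta),$$ with $c(0)=c_0$, $k(0)=k_0$, $h(0)=h_0$, $u(0)=u_0$, $z(0)=z_0$, and $z(t)=h(t)u(t)/k(t)$, and it satisfies the transversality conditions $\lim_{t\to\infty}e^{-\rho t}\lambda(t)k(t)=0$ and $\lim_{t\to\infty}e^{-\rho t}\mu(t)h(t)=0$.
   Context: Lucas–Uzawa model: a representative agent maximizes $\int_0^\infty \frac{c^{1-\sigma}-1}{1-\sigma}e^{-\rho t}\,dt$ over consumption $c$ and the fraction $u$ of labor allocated to production of physical capital, subject to $\dot k=\gamma k^\beta u^{1-\beta}h^{1-\beta}-\pi k-c$ and $\dot h=\delta(1-u)h$, where $k$ is physical capital, $h$ is human capital, $\rho$ the discount rate, $\pi$ the depreciation rate, $\gamma,\delta$ technology levels, $\beta$ the output elasticity of physical capital, $1/\sigma$ the elasticity of intertemporal substitution. The current-value Hamiltonian is $H=\frac{c^{1-\sigma}-1}{1-\sigma}+\lambda[\gamma k^\beta u^{1-\beta}h^{1-\beta}-\pi k-c]+\mu\delta(1-u)h$ with costate variables $\lambda,\mu$; the displayed equations are the Pontryagin first-order conditions. The variable $z$ denotes $hu/k$. *)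

(* Defs.v *)
From Stdlib Require Import Reals.
From Coquelicot Require Import Coquelicot.
Open Scope R_scope.

Record LUparams := mkLU {
  lu_rho : R; lu_dpi : R; lu_gam : R; lu_del : R; lu_bet : R; lu_sig : R;
  lu_c1 : R; lu_z0 : R; lu_c0 : R; lu_k0 : R; lu_h0 : R; lu_u0 : R }.

Section LU.
Variable p : LUparams.

(* real powers x^a are Rpower x a (= exp (a ln x)), used only for x > 0 *)
Definition zstar : R :=
  Rpower (lu_bet p * lu_gam p / (lu_del p + lu_dpi p)) (1 / (lu_bet p - 1)).

Definition theta : R :=
  (lu_del p + lu_dpi p - lu_dpi p * lu_bet p) / lu_bet p - (lu_del p - lu_rho p) / lu_sig p.

Definition zf (t : R) : R :=
  zstar * lu_z0 p /
  Rpower ((Rpower zstar (1 - lu_bet p) - Rpower (lu_z0 p) (1 - lu_bet p))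
            * exp (- ((1 - lu_bet p) * (lu_del p + lu_dpi p) / lu_bet p) * t)
          + Rpower (lu_z0 p) (1 - lu_bet p)) (1 / (1 - lu_bet p)).

Definition Ff (t : R) : R :=
  RInt (fun s => Rpower (zf s) ((lu_sig p - lu_bet p) / lu_sig p) * exp (- theta * s)) 0 t.

Definition Kc : R := lu_k0 p / (lu_c0 p * Rpower (lu_z0 p) ((lu_bet p - lu_sig p) / lu_sig p)).

Definition Dc : R :=
  lu_sig p * lu_c0 p * Rpower (lu_z0 p) (lu_bet p - 1)
  - (lu_rho p + lu_dpi p - lu_dpi p * lu_sig p) * lu_k0 p * Rpower (lu_z0 p) (lu_bet p - 1)
  + lu_bet p * lu_gam p * (1 - lu_sig p) * lu_k0 p.

Definition cf (t : R) : R :=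
  lu_c0 p * Rpower (lu_z0 p) (lu_bet p / lu_sig p) * exp (- ((lu_rho p - lu_del p) / lu_sig p) * t)
  * Rpower (zf t) (- (lu_bet p / lu_sig p)).

Definition kf (t : R) : R :=
  (Kc - Ff t) * lu_c0 p * Rpower (lu_z0 p) (lu_bet p / lu_sig p) * / zf t
  * exp ((lu_del p + lu_dpi p - lu_dpi p * lu_bet p) / lu_bet p * t).

Definition hf (t : R) : R :=
  lu_h0 p *
  (lu_sig p * lu_c0 p * Rpower (lu_z0 p) (lu_bet p / lu_sig p)
     * exp (- ((lu_rho p - lu_del p) / lu_sig p) * t)
     * Rpower (zf t) (lu_bet p - lu_bet p / lu_sig p)
   + (lu_bet p * lu_gam p * (1 - lu_sig p)
      - (lu_rho p + lu_dpi p - lu_dpi p * lu_sig p) * Rpower (zf t) (lu_bet p - 1))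
     * (Kc - Ff t) * lu_c0 p * Rpower (lu_z0 p) (lu_bet p / lu_sig p)
     * exp ((lu_del p + lu_dpi p - lu_dpi p * lu_bet p) / lu_bet p * t))
  / (lu_z0 p * Dc).

Definition uf (t : R) : R :=
  lu_u0 p / lu_k0 p * Dc *
  ((Kc - Ff t) /
   ((lu_bet p * lu_gam p * (1 - lu_sig p)
     - (lu_rho p + lu_dpi p - lu_dpi p * lu_sig p) * Rpower (zf t) (lu_bet p - 1)) * (Kc - Ff t)
    + lu_sig p * Rpower (zf t) (lu_bet p - lu_bet p / lu_sig p) * exp (- theta * t))).

Definition lamf (t : R) : R :=
  lu_c1 p * lu_del p / ((1 - lu_bet p) * lu_gam p) * exp ((lu_rho p - lu_del p) * t)
  * Rpower (zf t) (lu_bet p).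

Definition muf (t : R) : R := lu_c1 p * exp ((lu_rho p - lu_del p) * t).

End LU.

(* Main.v *)
Require Import Defs.
From Stdlib Require Import Reals Lra.
From Coquelicot Require Import Coquelicot.
Open Scope R_scope.
Open Scope R_scope.

Lemma exp_le_mono x y : x <= y -> exp x <= exp y.
Proof. intros [H|H]; [left; apply exp_increasing; auto | subst; lra]. Qed.

Lemma Rpower_pos x y : 0 < Rpower x y.
Proof. unfold Rpower; apply exp_pos. Qed.

Lemma Rpower_div x y c : 0 < x -> 0 < y -> Rpower (x / y) c = Rpower x c / Rpower y c.
Proof.
  intros hx hy. unfold Rpower. rewrite ln_div by auto.
  replace (c * (ln x - ln y)) with (c * ln x + - (c * ln y)) by ring.
  rewrite exp_plus, exp_Ropp. reflexivity.
Qed.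

Lemma Rpower_exp x c : Rpower (exp x) c = exp (c * x).
Proof. unfold Rpower; rewrite ln_exp; reflexivity. Qed.

Lemma Rpower_mult3 x y z c : 0 < x -> 0 < y -> 0 < z ->
  Rpower (x * y * z) c = Rpower x c * Rpower y c * Rpower z c.
Proof. intros. rewrite <- !Rpower_mult_distr; auto; apply Rmult_lt_0_compat; auto. Qed.

Lemma Rpower_inv x c : 0 < x -> Rpower x c * Rpower x (- c) = 1.
Proof. intros. rewrite <- Rpower_plus. replace (c + - c) with 0 by ring. apply Rpower_O; auto. Qed.

Definition rr p := (1 - lu_bet p) * (lu_del p + lu_dpi p) / lu_bet p.
Definition aa p := Rpower (zstar p) (1 - lu_bet p).
Definition bb p := Rpower (lu_z0 p) (1 - lu_bet p).
Definition Yf p t := (aa p - bb p) * exp (- rr p * t) + bb p.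

Lemma zf_eq p t : zf p t = zstar p * lu_z0 p / Rpower (Yf p t) (1 / (1 - lu_bet p)).
Proof. reflexivity. Qed.

Lemma aa_val p : 0 < lu_bet p < 1 -> 0 < lu_gam p -> 0 < lu_del p + lu_dpi p ->
  aa p = (lu_del p + lu_dpi p) / (lu_bet p * lu_gam p).
Proof.
  intros Hb Hg Hd. unfold aa, zstar. rewrite Rpower_mult.
  replace (1 / (lu_bet p - 1) * (1 - lu_bet p)) with (-(1)) by (field; lra).
  rewrite Rpower_Ropp, Rpower_1.
  - field. split; lra.
  - apply Rdiv_lt_0_compat; auto. apply Rmult_lt_0_compat; lra.
Qed.

Lemma zstar_pos p : 0 < zstar p.
Proof. apply Rpower_pos. Qed.

Lemma Y_pos_nbhd p : 0 < rr p -> 0 < lu_z0 p ->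
  exists eps, 0 < eps /\ forall s, - eps < s -> 0 < Yf p s.
Proof.
  intros Hr Hz. unfold Yf.
  assert (Ha : 0 < aa p) by apply Rpower_pos.
  assert (Hb : 0 < bb p) by apply Rpower_pos.
  destruct (Rle_lt_dec (bb p) (aa p)) as [Hab|Hab].
  - exists 1. split; [lra|]. intros s _.
    assert (0 < exp (- rr p * s)) by apply exp_pos. nra.
  - set (c := (bb p / (bb p - aa p) + 1) / 2).
    assert (Hc1 : 1 < c).
    { unfold c. assert (1 < bb p / (bb p - aa p)).
      { apply (Rmult_lt_reg_r (bb p - aa p)); [lra|].
        unfold Rdiv; rewrite Rmult_assoc, Rinv_l; lra. }
      lra. }
    assert (Hc2 : c < bb p / (bb p - aa p)).
    { unfold c. assert (1 < bb p / (bb p - aa p)).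
      { apply (Rmult_lt_reg_r (bb p - aa p)); [lra|].
        unfold Rdiv; rewrite Rmult_assoc, Rinv_l; lra. }
      lra. }
    exists (ln c / rr p). split.
    + apply Rdiv_lt_0_compat; auto. rewrite <- ln_1. apply ln_increasing; lra.
    + intros s Hs.
      assert (He : exp (- rr p * s) < c).
      { rewrite <- (exp_ln c) by lra. apply exp_increasing.
        apply (Rmult_lt_compat_l (rr p)) in Hs; auto.
        replace (rr p * - (ln c / rr p)) with (- ln c) in Hs by (field; lra). lra. }
      assert (He2 : exp (- rr p * s) * (bb p - aa p) < bb p).
      { apply Rlt_trans with (c * (bb p - aa p)).
        - apply Rmult_lt_compat_r; lra.
        - apply (Rmult_lt_compat_r (bb p - aa p)) in Hc2; [|lra].
          unfold Rdiv in Hc2. rewrite Rmult_assoc, Rinv_l in Hc2; lra. }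
      nra.
Qed.

Lemma Y_bounds p t : 0 <= rr p -> 0 <= t ->
  Rmin (aa p) (bb p) <= Yf p t <= Rmax (aa p) (bb p).
Proof.
  intros Hr Ht. unfold Yf.
  assert (H0 : 0 < exp (- rr p * t)) by apply exp_pos.
  assert (H1 : exp (- rr p * t) <= 1).
  { rewrite <- exp_0. apply exp_le_mono. nra. }
  unfold Rmin, Rmax. destruct (Rle_dec (aa p) (bb p)); split; nra.
Qed.

Lemma zf_pos p t : 0 < lu_z0 p -> 0 < zf p t.
Proof. intros. rewrite zf_eq. apply Rdiv_lt_0_compat; [apply Rmult_lt_0_compat; auto; apply zstar_pos | apply Rpower_pos]. Qed.

Lemma zf_pow_m p t : 0 < lu_bet p < 1 -> 0 < lu_z0 p -> 0 < Yf p t ->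
  Rpower (zf p t) (1 - lu_bet p) = aa p * bb p / Yf p t.
Proof.
  intros Hb Hz HY. rewrite zf_eq, Rpower_div.
  - rewrite Rpower_mult. replace (1 / (1 - lu_bet p) * (1 - lu_bet p)) with 1 by (field; lra).
    rewrite Rpower_1 by auto. unfold aa, bb. rewrite Rpower_mult_distr; auto. apply zstar_pos.
  - apply Rmult_lt_0_compat; auto; apply zstar_pos.
  - apply Rpower_pos.
Qed.

Lemma zf_deriv p t : 0 < lu_bet p < 1 -> 0 < lu_gam p -> 0 < lu_del p + lu_dpi p ->
  0 < lu_z0 p -> 0 < Yf p t ->
  is_derive (zf p) t (zf p t * ((lu_del p + lu_dpi p) / lu_bet p - lu_gam p * Rpower (zf p t) (1 - lu_bet p))).
Proof.
  intros Hb Hg Hd Hz HY.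
  rewrite zf_pow_m by auto. rewrite aa_val by auto.
  apply is_derive_ext with (f := fun t => zstar p * lu_z0 p / exp (1 / (1 - lu_bet p) * ln (Yf p t))).
  { intros; reflexivity. }
  assert (HY' := HY). unfold Yf in HY' |- *. rewrite aa_val in HY' |- * by auto.
  rewrite zf_eq. unfold Yf. unfold Rpower at 1. rewrite aa_val by auto.
  set (E := exp (1 / (1 - lu_bet p) * ln (((lu_del p + lu_dpi p) / (lu_bet p * lu_gam p) - bb p) * exp (- rr p * t) + bb p))).
  assert (HE : 0 < E) by apply exp_pos.
  auto_derive.
  - split; [exact HY'|split; [apply Rgt_not_eq, exp_pos|exact I]].
  - fold E. set (ee := exp (- rr p * t)). fold ee in HY'.
    set (Y := ((lu_del p + lu_dpi p) / (lu_bet p * lu_gam p) - bb p) * ee + bb p) in *.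
    unfold Y, rr. field. repeat split; try lra.
    replace ((lu_del p + lu_dpi p - bb p * (lu_bet p * lu_gam p)) * ee + bb p * (lu_bet p * lu_gam p)) with (Y * (lu_bet p * lu_gam p)) by (unfold Y; field; lra).
    apply Rgt_not_eq. apply Rmult_lt_0_compat; [lra|]. apply Rmult_lt_0_compat; lra.
Qed.

Lemma Rpower_deriv (f : R -> R) (t df c : R) : is_derive f t df -> 0 < f t ->
  is_derive (fun s => Rpower (f s) c) t (c * df / f t * Rpower (f t) c).
Proof.
  intros Hf Hp. unfold Rpower. auto_derive.
  - split; [exists df; exact Hf | split; [exact Hp | exact I]].
  - replace (Derive (fun x : R => f x) t) with df by (symmetry; apply is_derive_unique; exact Hf). field. lra.
Qed.

Definition iota p s := Rpower (zf p s) ((lu_sig p - lu_bet p) / lu_sig p) * exp (- theta p * s).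

Definition qf p t := (lu_del p + lu_dpi p) / lu_bet p - lu_gam p * Rpower (zf p t) (1 - lu_bet p).

Definition basic p := 0 < lu_rho p /\ 0 < lu_dpi p /\ 0 < lu_gam p /\ 0 < lu_del p /\
  0 < lu_bet p < 1 /\ 0 < lu_sig p /\ 0 < lu_z0 p.

Lemma rr_pos p : basic p -> 0 < rr p.
Proof.
  intros (h1&h2&h3&h4&h5&h6&h7). unfold rr. apply Rdiv_lt_0_compat; [|lra].
  apply Rmult_lt_0_compat; lra.
Qed.

Lemma good_set p : basic p -> exists eps, 0 < eps /\ forall s, - eps < s ->
  0 < Yf p s /\ is_derive (zf p) s (zf p s * qf p s).
Proof.
  intros H. destruct (Y_pos_nbhd p (rr_pos p H)) as [eps [He Hs]].
  { destruct H as (h1&h2&h3&h4&h5&h6&h7); auto. }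
  exists eps; split; auto. intros s Hs'. split; [auto|].
  destruct H as (h1&h2&h3&h4&h5&h6&h7). apply zf_deriv; auto; lra.
Qed.

Lemma iota_deriv p s : basic p -> is_derive (zf p) s (zf p s * qf p s) ->
  is_derive (iota p) s
   ((lu_sig p - lu_bet p) / lu_sig p * (zf p s * qf p s) / zf p s * Rpower (zf p s) ((lu_sig p - lu_bet p) / lu_sig p) * exp (- theta p * s)
    + Rpower (zf p s) ((lu_sig p - lu_bet p) / lu_sig p) * (- theta p * exp (- theta p * s))).
Proof.
  intros H Hz. unfold iota. apply (is_derive_mult (fun s => Rpower (zf p s) _) (fun s => exp (- theta p * s))).
  - apply Rpower_deriv; auto. apply zf_pos. destruct H as (h1&h2&h3&h4&h5&h6&h7); auto.
  - auto_derive; auto. ring.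
  - intros; apply Rmult_comm.
Qed.

Lemma Ff_deriv p : basic p -> exists eps, 0 < eps /\ forall t, - eps < t ->
  is_derive (Ff p) t (iota p t).
Proof.
  intros H. destruct (good_set p H) as [eps [He Hs]].
  exists eps; split; auto. intros t Ht.
  assert (Hc : forall s, - eps < s -> continuous (iota p) s).
  { intros s Hs'. apply (ex_derive_continuous (iota p) s). eexists. apply iota_deriv; auto. apply Hs; auto. }
  unfold Ff. fold (iota p).
  apply (is_derive_RInt (iota p) (fun t => RInt (iota p) 0 t) 0 t).
  - assert (Hd : 0 < t + eps) by lra.
    exists (mkposreal _ Hd). intros y Hy. apply (RInt_correct (iota p) 0 y). apply (ex_RInt_continuous (iota p)).
    intros z Hz. apply Hc.
    change (Rabs (y - t) < t + eps) in Hy. apply Rabs_def2 in Hy.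
    unfold Rmin in Hz; destruct (Rle_dec 0 y); lra.
  - apply Hc; auto.
Qed.

Lemma lnz_bound p : basic p -> exists L, forall t, 0 <= t -> Rabs (ln (zf p t)) <= L.
Proof.
  intros H. pose proof H as (h1&h2&h3&h4&h5&h6&h7).
  assert (Ha : 0 < aa p) by apply Rpower_pos.
  assert (Hb : 0 < bb p) by apply Rpower_pos.
  exists (Rabs (ln (zstar p * lu_z0 p)) + (Rabs (ln (aa p)) + Rabs (ln (bb p))) / (1 - lu_bet p)).
  intros t Ht.
  assert (HB := Y_bounds p t (Rlt_le _ _ (rr_pos p H)) Ht).
  assert (HY : 0 < Yf p t).
  { unfold Rmin in HB; destruct (Rle_dec (aa p) (bb p)); lra. }
  assert (HlY : Rabs (ln (Yf p t)) <= Rabs (ln (aa p)) + Rabs (ln (bb p))).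
  { unfold Rmin, Rmax in HB. destruct (Rle_dec (aa p) (bb p)).
    - assert (ln (aa p) <= ln (Yf p t)) by (apply ln_le; lra).
      assert (ln (Yf p t) <= ln (bb p)) by (apply ln_le; lra).
      unfold Rabs; repeat destruct Rcase_abs; lra.
    - assert (ln (bb p) <= ln (Yf p t)) by (apply ln_le; lra).
      assert (ln (Yf p t) <= ln (aa p)) by (apply ln_le; lra).
      unfold Rabs; repeat destruct Rcase_abs; lra. }
  rewrite zf_eq, ln_div.
  - unfold Rpower at 1. rewrite ln_exp.
    apply Rle_trans with (Rabs (ln (zstar p * lu_z0 p)) + Rabs (1 / (1 - lu_bet p) * ln (Yf p t))).
    + unfold Rminus. eapply Rle_trans; [apply Rabs_triang|]. rewrite Rabs_Ropp. lra.
    + apply Rplus_le_compat_l. rewrite Rabs_mult. rewrite Rabs_right.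
      * unfold Rdiv. rewrite Rmult_1_l, Rmult_comm. apply Rmult_le_compat_r; [|lra].
        left. apply Rinv_0_lt_compat; lra.
      * left. apply Rdiv_lt_0_compat; lra.
  - apply Rmult_lt_0_compat; auto; apply zstar_pos.
  - apply Rpower_pos.
Qed.

Lemma zpow_bound p c : basic p -> exists M, 0 < M /\ forall t, 0 <= t -> 0 < Rpower (zf p t) c <= M.
Proof.
  intros H. destruct (lnz_bound p H) as [L HL].
  exists (exp (Rabs c * L)). split; [apply exp_pos|]. intros t Ht.
  split; [apply Rpower_pos|]. unfold Rpower. apply exp_le_mono.
  eapply Rle_trans; [apply Rle_abs|]. rewrite Rabs_mult.
  apply Rmult_le_compat_l; [apply Rabs_pos | auto].
Qed.

Lemma lim_exp_bound (f : R -> R) C nu : nu < 0 ->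
  (forall t, 0 <= t -> Rabs (f t) <= C * exp (nu * t)) -> is_lim f p_infty 0.
Proof.
  intros Hnu Hb.
  assert (He : is_lim (fun t => exp (nu * t)) p_infty 0).
  { apply (is_lim_comp exp (fun t => nu * t) p_infty 0 m_infty).
    - apply is_lim_exp_m.
    - replace m_infty with (Rbar_mult nu p_infty).
      + apply (is_lim_scal_l (fun y => y)). apply is_lim_id.
      + simpl. destruct (Rle_dec 0 nu); [exfalso; lra|]. reflexivity.
    - exists 0. intros x _ Hx. discriminate Hx. }
  apply (is_lim_le_le_loc (fun t => - (C * exp (nu * t))) (fun t => C * exp (nu * t))).
  - exists 0. intros t Ht. specialize (Hb t (Rlt_le _ _ Ht)). apply Rabs_le_between in Hb. lra.
  - replace (Finite 0) with (Rbar_opp (Rbar_mult C 0)) by (simpl; f_equal; ring).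
    apply is_lim_opp. apply (is_lim_scal_l (fun t => exp (nu * t))). exact He.
  - replace (Finite 0) with (Rbar_mult C 0) by (simpl; f_equal; ring).
    apply (is_lim_scal_l (fun t => exp (nu * t))). exact He.
Qed.

Lemma mvt_helper (f df : R -> R) a b : a < b ->
  (forall x, a <= x <= b -> is_derive f x (df x)) ->
  exists c, a <= c <= b /\ f b - f a = df c * (b - a).
Proof.
  intros Hab Hd.
  destruct (MVT_gen f a b df) as [c [Hc He]].
  - intros x Hx. rewrite Rmin_left, Rmax_right in Hx by lra. apply Hd; lra.
  - intros x Hx. rewrite Rmin_left, Rmax_right in Hx by lra.
    apply continuity_pt_filterlim. apply (ex_derive_continuous f x). exists (df x). apply Hd; lra.
  - rewrite Rmin_left, Rmax_right in Hc by lra. exists c; auto.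
Qed.

Definition Gf p t := Kc p - Ff p t.

Lemma iota_pos p s : basic p -> 0 < iota p s.
Proof. intros; unfold iota. apply Rmult_lt_0_compat; [apply Rpower_pos|apply exp_pos]. Qed.

Lemma G_bounds p : basic p -> 0 < theta p -> is_lim (Ff p) p_infty (Kc p) ->
  exists M, 0 < M /\ forall t, 0 <= t -> 0 < Gf p t <= M * exp (- theta p * t).
Proof.
  intros H Hth Hlim.
  destruct (Ff_deriv p H) as [eps [He HF]].
  destruct (zpow_bound p ((lu_sig p - lu_bet p) / lu_sig p) H) as [M1 [HM1 HM1b]].
  exists (M1 / theta p). split; [apply Rdiv_lt_0_compat; auto|].
  intros t Ht. unfold Gf. split.
  - assert (Hinc : Ff p t < Ff p (t + 1)).
    { destruct (mvt_helper (Ff p) (iota p) t (t+1)) as [c [Hc Hc']]; [lra| |].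
      - intros x Hx. apply HF. lra.
      - assert (0 < iota p c) by (apply iota_pos; auto). nra. }
    assert (Hle : Rbar_le (Ff p (t+1)) (Kc p)).
    { apply (is_lim_le_loc (fun _ => Ff p (t+1)) (Ff p) p_infty).
      - exists (t+1). intros y Hy.
        destruct (mvt_helper (Ff p) (iota p) (t+1) y) as [c [Hc Hc']]; [lra| |].
        + intros x Hx. apply HF. lra.
        + assert (0 < iota p c) by (apply iota_pos; auto). nra.
      - apply is_lim_const.
      - exact Hlim. }
    simpl in Hle. lra.
  - set (phi := fun s => Ff p s + M1 / theta p * exp (- theta p * s)).
    assert (Hphi : forall s, t <= s -> phi s <= phi t).
    { intros s [Hs|Hs]; [|subst; lra].
      destruct (mvt_helper phi (fun x => iota p x - M1 * exp (- theta p * x)) t s) as [c [Hc Hc']]; [lra| |].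
      - intros x Hx. unfold phi.
        apply (is_derive_plus (Ff p) (fun s => M1 / theta p * exp (- theta p * s)) x (iota p x)).
        + apply HF; lra.
        + auto_derive; auto. field. lra.
      - assert (iota p c <= M1 * exp (- theta p * c)).
        { unfold iota. apply Rmult_le_compat_r; [left; apply exp_pos|]. apply HM1b; lra. }
        nra. }
    assert (Hle : Rbar_le (Kc p) (phi t)).
    { apply (is_lim_le_loc (Ff p) (fun _ => phi t) p_infty).
      - exists t. intros y Hy. specialize (Hphi y (Rlt_le _ _ Hy)). unfold phi in *.
        assert (0 < M1 / theta p * exp (- theta p * y)).
        { apply Rmult_lt_0_compat; [apply Rdiv_lt_0_compat; auto|apply exp_pos]. }
        lra.
      - exact Hlim.
      - apply is_lim_const. }
    simpl in Hle. unfold phi in Hle. lra.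
Qed.

Definition Bf p t :=
  (lu_bet p * lu_gam p * (1 - lu_sig p)
     - (lu_rho p + lu_dpi p - lu_dpi p * lu_sig p) * Rpower (zf p t) (lu_bet p - 1)) * (Kc p - Ff p t)
    + lu_sig p * Rpower (zf p t) (lu_bet p - lu_bet p / lu_sig p) * exp (- theta p * t).

Definition ccst p := lu_gam p * (1 - lu_bet p) * (lu_rho p - lu_del p + lu_del p * lu_sig p).

Lemma Bf_deriv p t : basic p ->
  is_derive (zf p) t (zf p t * qf p t) -> is_derive (Ff p) t (iota p t) ->
  is_derive (Bf p) t (- rr p * Bf p t - ccst p * Gf p t).
Proof.
  intros H Hz HF. pose proof H as (h1&h2&h3&h4&h5&h6&h7).
  assert (Zp : 0 < zf p t) by (apply zf_pos; auto).
  unfold Bf, Gf, Rpower. auto_derive.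
  - repeat split; auto; eexists; eauto.
  - replace (Derive (fun x : R => zf p x) t) with (zf p t * qf p t) by (symmetry; apply is_derive_unique; exact Hz).
    replace (Derive (fun x : R => Ff p x) t) with (iota p t) by (symmetry; apply is_derive_unique; exact HF).
    unfold qf, iota, Rpower.
    set (lz := ln (zf p t)).
    replace (exp ((lu_bet p - lu_bet p / lu_sig p) * lz)) with
      (exp ((lu_bet p - 1) * lz) * exp ((lu_sig p - lu_bet p) / lu_sig p * lz))
      by (rewrite <- exp_plus; f_equal; field; lra).
    replace (exp ((1 - lu_bet p) * lz)) with (/ exp ((lu_bet p - 1) * lz))
      by (rewrite <- exp_Ropp; f_equal; ring).
    assert (0 < exp ((lu_bet p - 1) * lz)) by apply exp_pos.
    unfold rr, ccst, theta. field. repeat split; lra.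
Qed.

Lemma derivs_at p : basic p -> exists eps, 0 < eps /\ forall t, - eps < t ->
  is_derive (zf p) t (zf p t * qf p t) /\ is_derive (Ff p) t (iota p t).
Proof.
  intros H. destruct (good_set p H) as [e1 [He1 H1]]. destruct (Ff_deriv p H) as [e2 [He2 H2]].
  exists (Rmin e1 e2). split; [apply Rmin_pos; auto|]. intros t Ht.
  split; [apply H1|apply H2]; pose proof (Rmin_l e1 e2); pose proof (Rmin_r e1 e2); lra.
Qed.

Lemma B_bound p : basic p -> 0 < theta p -> is_lim (Ff p) p_infty (Kc p) ->
  exists C, forall t, 0 <= t -> Rabs (Bf p t) <= C * exp (- theta p * t).
Proof.
  intros H Hth Hlim. pose proof H as (h1&h2&h3&h4&h5&h6&h7).
  destruct (G_bounds p H Hth Hlim) as [M [HM HG]].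
  destruct (zpow_bound p (lu_bet p - 1) H) as [M2 [HM2 HB2]].
  destruct (zpow_bound p (lu_bet p - lu_bet p / lu_sig p) H) as [M3 [HM3 HB3]].
  exists ((Rabs (lu_bet p * lu_gam p * (1 - lu_sig p)) + Rabs (lu_rho p + lu_dpi p - lu_dpi p * lu_sig p) * M2) * M + lu_sig p * M3).
  intros t Ht. specialize (HG t Ht). specialize (HB2 t Ht). specialize (HB3 t Ht).
  fold (Gf p t). unfold Bf. fold (Gf p t).
  set (g := exp (- theta p * t)) in *. assert (0 < g) by apply exp_pos.
  eapply Rle_trans; [apply Rabs_triang|].
  rewrite (Rabs_mult _ (Gf p t)), (Rabs_mult _ g), (Rabs_mult (lu_sig p)). rewrite (Rabs_right (Gf p t)) by lra. rewrite (Rabs_right g) by lra.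
  rewrite (Rabs_right (lu_sig p)) by lra.
  rewrite (Rabs_right (Rpower (zf p t) (lu_bet p - lu_bet p / lu_sig p))) by lra.
  assert (Rabs (lu_bet p * lu_gam p * (1 - lu_sig p) - (lu_rho p + lu_dpi p - lu_dpi p * lu_sig p) * Rpower (zf p t) (lu_bet p - 1))
    <= Rabs (lu_bet p * lu_gam p * (1 - lu_sig p)) + Rabs (lu_rho p + lu_dpi p - lu_dpi p * lu_sig p) * M2).
  { unfold Rminus at 1. eapply Rle_trans; [apply Rabs_triang|]. rewrite Rabs_Ropp, (Rabs_mult (lu_rho p + lu_dpi p - lu_dpi p * lu_sig p)).
    rewrite (Rabs_right (Rpower _ _)) by lra. apply Rplus_le_compat_l.
    apply Rmult_le_compat_l; [apply Rabs_pos|lra]. }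
  assert (0 <= Rabs (lu_rho p + lu_dpi p - lu_dpi p * lu_sig p)) by apply Rabs_pos.
  assert (0 <= Rabs (lu_bet p * lu_gam p * (1 - lu_sig p))) by apply Rabs_pos.
  assert (Rabs (lu_bet p * lu_gam p * (1 - lu_sig p) - (lu_rho p + lu_dpi p - lu_dpi p * lu_sig p) * Rpower (zf p t) (lu_bet p - 1)) * Gf p t
     <= (Rabs (lu_bet p * lu_gam p * (1 - lu_sig p)) + Rabs (lu_rho p + lu_dpi p - lu_dpi p * lu_sig p) * M2) * (M * g)).
  { apply Rmult_le_compat; try lra. apply Rabs_pos. }
  assert (lu_sig p * Rpower (zf p t) (lu_bet p - lu_bet p / lu_sig p) * g <= lu_sig p * M3 * g).
  { apply Rmult_le_compat_r; [lra|]. apply Rmult_le_compat_l; lra. }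
  nra.
Qed.

Lemma B_pos p : basic p -> 0 < theta p -> is_lim (Ff p) p_infty (Kc p) ->
  lu_del p < lu_rho p + lu_del p * lu_sig p ->
  forall t, 0 <= t -> 0 < Bf p t.
Proof.
  intros H Hth Hlim Hnu. pose proof H as (h1&h2&h3&h4&h5&h6&h7).
  destruct (B_bound p H Hth Hlim) as [C HC].
  destruct (derivs_at p H) as [eps [He Hd]].
  destruct (G_bounds p H Hth Hlim) as [M [HM HG]].
  set (phi := fun s => Bf p s * exp (rr p * s)).
  assert (Hlimphi : is_lim phi p_infty 0).
  { apply (lim_exp_bound phi C (rr p - theta p)).
    - unfold rr, theta. apply (Rmult_lt_reg_r (lu_bet p * lu_sig p)); [nra|].
      field_simplify; try lra. nra.
    - intros t Ht. unfold phi. rewrite Rabs_mult, (Rabs_right (exp _)) by (left; apply exp_pos).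
      replace ((rr p - theta p) * t) with (- theta p * t + rr p * t) by ring.
      rewrite exp_plus, <- Rmult_assoc. apply Rmult_le_compat_r; [left; apply exp_pos|]. auto. }
  assert (Hdphi : forall x, 0 <= x -> is_derive phi x (- ccst p * Gf p x * exp (rr p * x))).
  { intros x Hx. destruct (Hd x ltac:(lra)) as [Hz HF].
    assert (HB := Bf_deriv p x H Hz HF).
    unfold phi. auto_derive.
    - eexists; exact HB.
    - replace (Derive (fun x : R => Bf p x) x) with (- rr p * Bf p x - ccst p * Gf p x)
        by (symmetry; apply is_derive_unique; exact HB). ring. }
  intros t Ht.
  assert (H1 : phi (t + 1) < phi t).
  { destruct (mvt_helper phi (fun x => - ccst p * Gf p x * exp (rr p * x)) t (t+1)) as [c [Hc Hc']]; [lra| |].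
    - intros x Hx; apply Hdphi; lra.
    - assert (0 < ccst p).
      { unfold ccst. apply Rmult_lt_0_compat; [apply Rmult_lt_0_compat|]; lra. }
      assert (0 < Gf p c) by (apply HG; lra).
      assert (0 < exp (rr p * c)) by apply exp_pos.
      assert (0 < ccst p * Gf p c * exp (rr p * c)) by (apply Rmult_lt_0_compat; [apply Rmult_lt_0_compat|]; lra).
      lra. }
  assert (H2 : Rbar_le 0 (phi (t + 1))).
  { apply (is_lim_le_loc phi (fun _ => phi (t + 1)) p_infty).
    - exists (t + 1). intros y Hy.
      destruct (mvt_helper phi (fun x => - ccst p * Gf p x * exp (rr p * x)) (t+1) y) as [c [Hc Hc']]; [lra| |].
      + intros x Hx; apply Hdphi; lra.
      + assert (0 < ccst p).
        { unfold ccst. apply Rmult_lt_0_compat; [apply Rmult_lt_0_compat|]; lra. }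
        assert (0 < Gf p c) by (apply HG; lra).
        assert (0 < exp (rr p * c)) by apply exp_pos.
        assert (0 < ccst p * Gf p c * exp (rr p * c)) by (apply Rmult_lt_0_compat; [apply Rmult_lt_0_compat|]; lra).
        nra.
    - exact Hlimphi.
    - apply is_lim_const. }
  simpl in H2. unfold phi in H1.
  assert (0 < exp (rr p * t)) by apply exp_pos.
  assert (0 < Bf p t * exp (rr p * t)) by (unfold phi in H2; lra).
  destruct (Rlt_le_dec 0 (Bf p t)) as [|Hn]; auto. nra.
Qed.

Definition e1c p := (lu_del p + lu_dpi p - lu_dpi p * lu_bet p) / lu_bet p.
Definition K0c p := lu_h0 p * (lu_c0 p * Rpower (lu_z0 p) (lu_bet p / lu_sig p)) / (lu_z0 p * Dc p).

Lemma exp_split p t : lu_sig p <> 0 -> lu_bet p <> 0 ->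
  exp (- ((lu_rho p - lu_del p) / lu_sig p) * t) = exp (e1c p * t) * exp (- theta p * t).
Proof. intros. rewrite <- exp_plus. f_equal. unfold e1c, theta. field; auto. Qed.

Lemma hf_eq p t : lu_sig p <> 0 -> lu_bet p <> 0 -> hf p t = K0c p * exp (e1c p * t) * Bf p t.
Proof.
  intros Hs Hb. unfold hf, K0c, Bf. rewrite exp_split by auto. fold (e1c p).
  unfold Rdiv. ring.
Qed.

Lemma kf_eq p t : kf p t = Gf p t * (lu_c0 p * Rpower (lu_z0 p) (lu_bet p / lu_sig p)) * / zf p t * exp (e1c p * t).
Proof. unfold kf, Gf, e1c. ring. Qed.

Lemma uf_eq p t : uf p t = lu_u0 p / lu_k0 p * Dc p * (Gf p t / Bf p t).
Proof. reflexivity. Qed.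

Lemma pow_prod1 k h z u b : 0 < k -> 0 < h -> 0 < z -> u = z * k / h ->
  Rpower k b * Rpower u (1 - b) * Rpower h (1 - b) = k * Rpower z (1 - b).
Proof.
  intros hk hh hz ->. rewrite Rpower_div, <- Rpower_mult_distr; auto.
  2: apply Rmult_lt_0_compat; auto.
  assert (0 < Rpower h (1 - b)) by apply Rpower_pos.
  replace (Rpower k b * (Rpower z (1 - b) * Rpower k (1 - b) / Rpower h (1 - b)) * Rpower h (1 - b))
    with (Rpower k (b + (1 - b)) * Rpower z (1 - b)) by (rewrite Rpower_plus; field; lra).
  replace (b + (1 - b)) with 1 by ring. rewrite Rpower_1; auto.
Qed.

Lemma pow_prod2 k h z u b : 0 < k -> 0 < h -> 0 < z -> u = z * k / h ->
  Rpower u (1 - b) * Rpower k (b - 1) * Rpower h (1 - b) = Rpower z (1 - b).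
Proof.
  intros hk hh hz ->. rewrite Rpower_div, <- Rpower_mult_distr; auto.
  2: apply Rmult_lt_0_compat; auto.
  assert (0 < Rpower h (1 - b)) by apply Rpower_pos.
  replace (b - 1) with (- (1 - b)) by ring.
  assert (Rpower k (1 - b) * Rpower k (- (1 - b)) = 1) by (apply Rpower_inv; auto).
  replace (Rpower z (1 - b) * Rpower k (1 - b) / Rpower h (1 - b) * Rpower k (- (1 - b)) * Rpower h (1 - b)) with (Rpower z (1 - b) * (Rpower k (1 - b) * Rpower k (- (1 - b)))) by (field; lra).
  rewrite H0; ring.
Qed.

Lemma pow_prod3 k h z u b : 0 < k -> 0 < h -> 0 < z -> u = z * k / h ->
  Rpower u b = Rpower k b * Rpower h (- b) * Rpower z b.
Proof.
  intros hk hh hz ->. rewrite Rpower_div, <- Rpower_mult_distr; auto.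
  2: apply Rmult_lt_0_compat; auto.
  rewrite Rpower_Ropp. field. apply Rgt_not_eq, Rpower_pos.
Qed.

Lemma Rpower_comb x a b c : 0 < x -> a + b = c + 1 -> Rpower x a * Rpower x b = x * Rpower x c.
Proof. intros hx e. rewrite <- Rpower_plus, e, Rpower_plus, Rpower_1 by auto. ring. Qed.

Theorem mainTheorem1 (p : LUparams) :
  0 < lu_rho p -> 0 < lu_dpi p -> 0 < lu_gam p -> 0 < lu_del p ->
  0 < lu_bet p < 1 -> 0 < lu_sig p -> lu_sig p <> 1 ->
  lu_rho p < lu_del p -> lu_del p < lu_rho p + lu_del p * lu_sig p ->
  (lu_del p + lu_dpi p - lu_dpi p * lu_bet p) / lu_bet p - (lu_del p - lu_rho p) / lu_sig p > 0 ->
  0 < lu_c1 p -> 0 < lu_z0 p -> lu_z0 p <> zstar p ->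
  0 < lu_c0 p -> 0 < lu_k0 p -> 0 < lu_h0 p -> 0 < lu_u0 p ->
  lu_u0 p = lu_z0 p * lu_k0 p / lu_h0 p ->
  lu_c0 p * Rpower (lu_z0 p) (lu_bet p / lu_sig p)
    = Rpower (lu_c1 p * lu_del p / ((1 - lu_bet p) * lu_gam p)) (- (1 / lu_sig p)) ->
  is_lim (Ff p) p_infty (Kc p) ->
  lu_gam p * (1 - lu_bet p) * (lu_rho p - lu_del p + lu_del p * lu_sig p) / lu_del p
    = lu_u0 p / lu_k0 p * Dc p ->
  (forall t, 0 <= t ->
     lamf p t = Rpower (cf p t) (- lu_sig p)
     /\ Rpower (uf p t) (lu_bet p)
        = lu_gam p * (1 - lu_bet p) * Rpower (kf p t) (lu_bet p)
          * Rpower (hf p t) (- lu_bet p) / lu_del p * (lamf p t / muf p t)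
     /\ is_derive (kf p) t
          (lu_gam p * Rpower (kf p t) (lu_bet p) * Rpower (uf p t) (1 - lu_bet p)
           * Rpower (hf p t) (1 - lu_bet p) - lu_dpi p * kf p t - cf p t)
     /\ is_derive (hf p) t (lu_del p * (1 - uf p t) * hf p t)
     /\ is_derive (lamf p) t
          (- lamf p t * lu_gam p * lu_bet p * Rpower (uf p t) (1 - lu_bet p)
             * Rpower (kf p t) (lu_bet p - 1) * Rpower (hf p t) (1 - lu_bet p)
           + lamf p t * (lu_rho p + lu_dpi p))
     /\ is_derive (muf p) t (muf p t * (lu_rho p - lu_del p))
     /\ zf p t = hf p t * uf p t / kf p t)
  /\ cf p 0 = lu_c0 p /\ kf p 0 = lu_k0 p /\ hf p 0 = lu_h0 p /\ uf p 0 = lu_u0 p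
  /\ zf p 0 = lu_z0 p
  /\ is_lim (fun t => exp (- lu_rho p * t) * lamf p t * kf p t) p_infty 0
  /\ is_lim (fun t => exp (- lu_rho p * t) * muf p t * hf p t) p_infty 0.
Proof.
  intros Hrho Hpi Hgam Hdel Hbet Hsig Hsig1 Hrd Hnu Hth Hc1 Hz0 Hzs Hc0 Hk0 Hh0 Hu0 Hu0eq HA Hlim HD.
  assert (H : basic p) by (repeat split; auto; lra).
  assert (Hth' : 0 < theta p) by (unfold theta; lra).
  assert (HDp : 0 < Dc p).
  { assert (0 < lu_gam p * (1 - lu_bet p) * (lu_rho p - lu_del p + lu_del p * lu_sig p) / lu_del p).
    { apply Rdiv_lt_0_compat; auto. apply Rmult_lt_0_compat; [apply Rmult_lt_0_compat|]; lra. }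
    rewrite HD in H0. assert (0 < lu_u0 p / lu_k0 p) by (apply Rdiv_lt_0_compat; auto).
    destruct (Rlt_le_dec 0 (Dc p)) as [|Hn]; auto. nra. }
  assert (HAp : 0 < lu_c0 p * Rpower (lu_z0 p) (lu_bet p / lu_sig p)) by (apply Rmult_lt_0_compat; auto; apply Rpower_pos).
  assert (HK0 : 0 < K0c p).
  { unfold K0c. apply Rdiv_lt_0_compat; apply Rmult_lt_0_compat; auto. }
  assert (Hs0 : lu_sig p <> 0) by lra.
  assert (HRz : 0 < Rpower (lu_z0 p) (lu_bet p / lu_sig p)) by apply Rpower_pos.
  assert (Hb0 : lu_bet p <> 0) by lra.
  destruct (G_bounds p H Hth' Hlim) as [MG [HMG HG]].
  assert (HBp := B_pos p H Hth' Hlim Hnu).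
  assert (Hpos : forall t, 0 <= t -> 0 < zf p t /\ 0 < kf p t /\ 0 < hf p t /\ 0 < uf p t
                                    /\ zf p t = hf p t * uf p t / kf p t).
  { intros t Ht. specialize (HG t Ht). specialize (HBp t Ht).
    assert (Hz : 0 < zf p t) by (apply zf_pos; auto).
    assert (HE : 0 < exp (e1c p * t)) by apply exp_pos.
    rewrite kf_eq, hf_eq, uf_eq by auto.
    repeat split; auto.
    - apply Rmult_lt_0_compat; [|auto]. apply Rmult_lt_0_compat; [apply Rmult_lt_0_compat; [lra|auto]|].
      apply Rinv_0_lt_compat; auto.
    - apply Rmult_lt_0_compat; [apply Rmult_lt_0_compat|]; auto.
    - apply Rmult_lt_0_compat; [apply Rmult_lt_0_compat; [apply Rdiv_lt_0_compat|]|apply Rdiv_lt_0_compat]; lra.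
    - unfold K0c. rewrite Hu0eq. field. repeat split; lra. }
  destruct (derivs_at p H) as [eps [Heps Hd]].
  split.
  { intros t Ht.
    destruct (Hpos t Ht) as (Hz & Hk & Hh & Hu & Hzeq).
    assert (Hueq : uf p t = zf p t * kf p t / hf p t) by (rewrite Hzeq; field; lra).
    destruct (Hd t ltac:(lra)) as [Hzd HFd].
    split; [|split; [|split; [|split; [|split; [|split]]]]].
    -
      unfold lamf, cf. rewrite Rpower_mult3; [|auto|apply exp_pos|apply Rpower_pos].
      rewrite HA, !Rpower_mult, Rpower_exp.
      replace (- (1 / lu_sig p) * - lu_sig p) with 1 by (field; auto).
      rewrite Rpower_1.
      2: { apply Rdiv_lt_0_compat; [apply Rmult_lt_0_compat|apply Rmult_lt_0_compat]; lra. }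
      replace (- lu_sig p * (- ((lu_rho p - lu_del p) / lu_sig p) * t)) with ((lu_rho p - lu_del p) * t) by (field; auto).
      replace (- (lu_bet p / lu_sig p) * - lu_sig p) with (lu_bet p) by (field; auto).
      reflexivity.
    - rewrite (pow_prod3 (kf p t) (hf p t) (zf p t) (uf p t) (lu_bet p) Hk Hh Hz Hueq).
      unfold lamf, muf. assert (0 < exp ((lu_rho p - lu_del p) * t)) by apply exp_pos.
      field. repeat split; lra.
    - replace (lu_gam p * Rpower (kf p t) (lu_bet p) * Rpower (uf p t) (1 - lu_bet p) * Rpower (hf p t) (1 - lu_bet p))
        with (lu_gam p * (kf p t * Rpower (zf p t) (1 - lu_bet p)))
        by (rewrite <- (pow_prod1 (kf p t) (hf p t) (zf p t) (uf p t) (lu_bet p) Hk Hh Hz Hueq); ring).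
      apply is_derive_ext with (f := fun s => Gf p s * (lu_c0 p * Rpower (lu_z0 p) (lu_bet p / lu_sig p)) * / zf p s * exp (e1c p * s)).
      { intros s; symmetry; apply kf_eq. }
      unfold Gf. auto_derive.
      + repeat split; try (eexists; eauto). lra.
      + replace (Derive (fun x : R => zf p x) t) with (zf p t * qf p t) by (symmetry; apply is_derive_unique; exact Hzd).
        replace (Derive (fun x : R => Ff p x) t) with (iota p t) by (symmetry; apply is_derive_unique; exact HFd).
        rewrite kf_eq. unfold cf, Gf. rewrite exp_split by auto.
        unfold iota, qf.
        replace (Rpower (zf p t) ((lu_sig p - lu_bet p) / lu_sig p)) with (zf p t * Rpower (zf p t) (- (lu_bet p / lu_sig p))).
        2: { rewrite <- (Rpower_1 (zf p t)) at 1 by auto. rewrite <- Rpower_plus. f_equal. field; auto. }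
        unfold e1c. field. repeat split; lra.
    - assert (HBd := Bf_deriv p t H Hzd HFd).
      assert (HBt := HBp t Ht).
      apply is_derive_ext with (f := fun s => K0c p * exp (e1c p * s) * Bf p s).
      { intros s; symmetry; apply hf_eq; auto. }
      auto_derive.
      + eexists; exact HBd.
      + replace (Derive (fun x : R => Bf p x) t) with (- rr p * Bf p t - ccst p * Gf p t)
          by (symmetry; apply is_derive_unique; exact HBd).
        replace (ccst p) with (lu_del p * (lu_u0 p / lu_k0 p * Dc p)) by (unfold ccst; rewrite <- HD; field; lra).
        rewrite uf_eq, hf_eq by auto. unfold e1c, rr. field. repeat split; lra.
    - replace (- lamf p t * lu_gam p * lu_bet p * Rpower (uf p t) (1 - lu_bet p) * Rpower (kf p t) (lu_bet p - 1) * Rpower (hf p t) (1 - lu_bet p))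
        with (- lamf p t * lu_gam p * lu_bet p * Rpower (zf p t) (1 - lu_bet p))
        by (rewrite <- (pow_prod2 (kf p t) (hf p t) (zf p t) (uf p t) (lu_bet p) Hk Hh Hz Hueq); ring).
      unfold lamf, Rpower. auto_derive.
      + repeat split; try (eexists; eauto). lra.
      + replace (Derive (fun x : R => zf p x) t) with (zf p t * qf p t) by (symmetry; apply is_derive_unique; exact Hzd).
        unfold qf, Rpower. field. repeat split; lra.
    - unfold muf. auto_derive; auto. ring.
    - exact Hzeq. }
  assert (Hz00 : zf p 0 = lu_z0 p).
  { rewrite zf_eq. unfold Yf. rewrite Rmult_0_r, exp_0.
    replace ((aa p - bb p) * 1 + bb p) with (aa p) by ring. unfold aa. rewrite Rpower_mult.
    replace ((1 - lu_bet p) * (1 / (1 - lu_bet p))) with 1 by (field; lra).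
    rewrite Rpower_1 by apply zstar_pos. field. apply Rgt_not_eq, zstar_pos. }
  assert (HF0 : Ff p 0 = 0) by (unfold Ff; rewrite RInt_point; reflexivity).
  assert (KA : Kc p * (lu_c0 p * Rpower (lu_z0 p) (lu_bet p / lu_sig p)) = lu_k0 p * lu_z0 p).
  { unfold Kc. replace ((lu_bet p - lu_sig p) / lu_sig p) with (lu_bet p / lu_sig p + - (1)) by (field; auto).
    rewrite Rpower_plus, Rpower_Ropp, Rpower_1 by auto. field. repeat split; lra. }
  assert (Hk00 : kf p 0 = lu_k0 p).
  { rewrite kf_eq. unfold Gf. rewrite HF0, Hz00, Rmult_0_r, exp_0.
    replace ((Kc p - 0) * (lu_c0 p * Rpower (lu_z0 p) (lu_bet p / lu_sig p)) * / lu_z0 p * 1)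
      with (Kc p * (lu_c0 p * Rpower (lu_z0 p) (lu_bet p / lu_sig p)) / lu_z0 p) by (field; lra).
    rewrite KA. field. lra. }
  assert (Hh00 : hf p 0 = lu_h0 p).
  { rewrite hf_eq by auto. unfold Bf, K0c. rewrite HF0, Hz00, !Rmult_0_r, !exp_0.
    replace (Kc p) with (lu_k0 p * lu_z0 p / (lu_c0 p * Rpower (lu_z0 p) (lu_bet p / lu_sig p)))
      by (rewrite <- KA; field; lra).
    replace (Rpower (lu_z0 p) (lu_bet p - lu_bet p / lu_sig p))
      with (lu_z0 p * Rpower (lu_z0 p) (lu_bet p - 1) / Rpower (lu_z0 p) (lu_bet p / lu_sig p)).
    2: { rewrite <- (Rpower_comb (lu_z0 p) (lu_bet p / lu_sig p) (lu_bet p - lu_bet p / lu_sig p)) by (auto; ring).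
         field. lra. }
    unfold Dc in *. field. repeat split; lra. }
  assert (Hu00 : uf p 0 = lu_u0 p).
  { destruct (Hpos 0 (Rle_refl 0)) as (_ & _ & _ & _ & e). rewrite Hz00, Hk00, Hh00 in e.
    rewrite Hu0eq, e. field. lra. }
  assert (Hnu' : (lu_del p - lu_rho p) / lu_sig p - lu_del p < 0).
  { replace ((lu_del p - lu_rho p) / lu_sig p - lu_del p) with ((lu_del p - lu_rho p - lu_del p * lu_sig p) / lu_sig p)
      by (field; auto).
    apply Rdiv_neg_pos; lra. }
  assert (Hexp : forall t, exp (- lu_rho p * t) * exp ((lu_rho p - lu_del p) * t) * exp (e1c p * t)
                 = exp (theta p * t) * exp (((lu_del p - lu_rho p) / lu_sig p - lu_del p) * t)).
  { intros t. rewrite <- !exp_plus. f_equal. unfold e1c, theta. field; auto. }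
  assert (HGt : forall t, 0 <= t -> Gf p t * exp (theta p * t) <= MG).
  { intros t Ht. destruct (HG t Ht) as [_ Hg].
    apply Rmult_le_compat_r with (r := exp (theta p * t)) in Hg; [|left; apply exp_pos].
    rewrite Rmult_assoc, <- exp_plus in Hg. replace (- theta p * t + theta p * t) with 0 in Hg by ring.
    rewrite exp_0 in Hg. lra. }
  assert (Hc00 : cf p 0 = lu_c0 p).
  { unfold cf. rewrite Hz00, Rmult_0_r, exp_0, Rmult_1_r, Rmult_assoc, Rpower_inv by auto. ring. }
  destruct (zpow_bound p (lu_bet p - 1) H) as [M2 [HM2 HB2]].
  destruct (B_bound p H Hth' Hlim) as [CB HCB].
  split; [exact Hc00|]. split; [exact Hk00|]. split; [exact Hh00|]. split; [exact Hu00|].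
  split; [exact Hz00|]. split.
  - apply (lim_exp_bound _ (lu_c1 p * lu_del p / ((1 - lu_bet p) * lu_gam p) * (lu_c0 p * Rpower (lu_z0 p) (lu_bet p / lu_sig p)) * M2 * MG) _ Hnu').
    intros t Ht. destruct (Hpos t Ht) as (Hz & Hk & _). specialize (HB2 t Ht). specialize (HG t Ht).
    rewrite Rabs_right.
    2: { left. unfold lamf. apply Rmult_lt_0_compat; auto. apply Rmult_lt_0_compat; [apply exp_pos|].
         apply Rmult_lt_0_compat; [apply Rmult_lt_0_compat; [|apply exp_pos]|apply Rpower_pos].
         apply Rdiv_lt_0_compat; [apply Rmult_lt_0_compat|apply Rmult_lt_0_compat]; lra. }
    replace (exp (- lu_rho p * t) * lamf p t * kf p t) with
      (lu_c1 p * lu_del p / ((1 - lu_bet p) * lu_gam p) * (lu_c0 p * Rpower (lu_z0 p) (lu_bet p / lu_sig p))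
       * Rpower (zf p t) (lu_bet p - 1) * Gf p t * (exp (- lu_rho p * t) * exp ((lu_rho p - lu_del p) * t) * exp (e1c p * t))).
    2: { unfold lamf. rewrite kf_eq.
         assert (Ezb : Rpower (zf p t) (lu_bet p) = zf p t * Rpower (zf p t) (lu_bet p - 1)).
         { replace (lu_bet p) with (1 + (lu_bet p - 1)) at 1 by ring. rewrite Rpower_plus, Rpower_1; auto. }
         rewrite Ezb.
         field. lra. }
    rewrite Hexp.
    set (C1 := lu_c1 p * lu_del p / ((1 - lu_bet p) * lu_gam p) * (lu_c0 p * Rpower (lu_z0 p) (lu_bet p / lu_sig p))).
    assert (0 < C1).
    { unfold C1. apply Rmult_lt_0_compat; auto.
      apply Rdiv_lt_0_compat; [apply Rmult_lt_0_compat|apply Rmult_lt_0_compat]; lra. }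
    assert (0 < exp (((lu_del p - lu_rho p) / lu_sig p - lu_del p) * t)) by apply exp_pos.
    assert (0 < exp (theta p * t)) by apply exp_pos.
    assert (0 < Gf p t) by (apply HG; auto).
    specialize (HGt t Ht).
    replace (C1 * Rpower (zf p t) (lu_bet p - 1) * Gf p t * (exp (theta p * t) * exp (((lu_del p - lu_rho p) / lu_sig p - lu_del p) * t)))
      with (C1 * (Rpower (zf p t) (lu_bet p - 1) * (Gf p t * exp (theta p * t))) * exp (((lu_del p - lu_rho p) / lu_sig p - lu_del p) * t)) by ring.
    rewrite (Rmult_assoc C1 M2 MG).
    apply Rmult_le_compat_r; [lra|]. apply Rmult_le_compat_l; [lra|].
    apply Rmult_le_compat; try lra. apply Rmult_le_pos; lra.
  - apply (lim_exp_bound _ (lu_c1 p * K0c p * CB) _ Hnu').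
    intros t Ht. specialize (HCB t Ht).
    replace (exp (- lu_rho p * t) * muf p t * hf p t) with
      (lu_c1 p * K0c p * (Bf p t * exp (theta p * t)) * exp (((lu_del p - lu_rho p) / lu_sig p - lu_del p) * t)).
    2: { unfold muf. rewrite hf_eq by auto.
         transitivity (lu_c1 p * K0c p * Bf p t * (exp (- lu_rho p * t) * exp ((lu_rho p - lu_del p) * t) * exp (e1c p * t)));
         [rewrite Hexp; ring | ring]. }
    assert (0 < exp (((lu_del p - lu_rho p) / lu_sig p - lu_del p) * t)) by apply exp_pos.
    assert (0 < exp (theta p * t)) by apply exp_pos.
    assert (HBt : Rabs (Bf p t * exp (theta p * t)) <= CB).
    { rewrite Rabs_mult, (Rabs_right (exp _)) by lra.
      apply Rmult_le_compat_r with (r := exp (theta p * t)) in HCB; [|lra].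
      rewrite Rmult_assoc, <- exp_plus in HCB. replace (- theta p * t + theta p * t) with 0 in HCB by ring.
      rewrite exp_0 in HCB. lra. }
    rewrite !Rabs_mult, (Rabs_right (exp (((lu_del p - lu_rho p) / lu_sig p - lu_del p) * t))) by lra.
    rewrite (Rabs_right (lu_c1 p)), (Rabs_right (K0c p)) by lra.
    apply Rmult_le_compat_r; [lra|]. rewrite <- Rabs_mult.
    apply Rmult_le_compat_l; [apply Rmult_le_pos; lra|]. exact HBt.
Qed.
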